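(* Let $m\ge1$, $n\in\mathbb{Z}$, and let $B=(b_0,\ldots,b_{m-1})$ and $T=(t_0,\ldots,t_{m-1})$ be sequences of integers with $\sum_i b_i\ge n$ and $\sum_i t_i=n+m-1$. Then for every $l\in\{1,\ldots,m\}$ there exists $i\in\{0,\ldots,m-1\}$ such that for every $l'\in\{1,\ldots,l\}$, $$\sum_{j=i}^{i+l'-1}b_j\ge 1-l'+\sum_{j=i}^{i+l'-1}t_j.$$
   Context: Indices of $B$ and $T$ are taken modulo $m$ (ring arrangement). *)

(* Defs.v *)
(* integers Z. Sequences of length m are functions nat -> Z,
   read only at indices 0..m-1; indices in window sums are taken modulo m. *)
From Stdlib Require Import ZArith Arith.
Open Scope Z_scope.

Fixpoint zsum (f : nat -> Z) (k : nat) : Z :=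
  match k with
  | O => 0
  | S k' => zsum f k' + f k'
  end.

Definition cyc_sum (m : nat) (s : nat -> Z) (i l : nat) : Z :=
  zsum (fun j => s ((i + j) mod m)%nat) l.

(* Main.v *)
Require Import Defs.
From Stdlib Require Import ZArith Arith Lia.
Open Scope Z_scope.

Lemma zsum_ext f g k : (forall j, (j < k)%nat -> f j = g j) -> zsum f k = zsum g k.
Proof.
  induction k; simpl; intros H; auto.
  rewrite IHk by (intros; apply H; lia). rewrite H by lia. reflexivity.
Qed.

Lemma zsum_shift f i l :
  zsum (fun j => f (i + j)%nat) l = zsum f (i + l) - zsum f i.
Proof.
  induction l; simpl.
  - rewrite Nat.add_0_r. lia.
  - rewrite Nat.add_succ_r. simpl. rewrite IHl. lia.
Qed.

Lemma zsum_lin b t k :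
  zsum (fun j => b j - t j + 1) k = zsum b k - zsum t k + Z.of_nat k.
Proof. induction k; simpl; [reflexivity|]. rewrite IHk. lia. Qed.

Lemma zsum_lin2 b t k :
  zsum (fun j => b j - t j + 1) k = zsum b k - zsum t k + Z.of_nat k.
Proof. apply zsum_lin. Qed.

Lemma argmin (F : nat -> Z) m : (1 <= m)%nat ->
  exists i, (i < m)%nat /\ (forall k, (k < m)%nat -> F i <= F k) /\
    (forall k, (i < k < m)%nat -> F i < F k).
Proof.
  induction m; intros Hm; [lia|].
  destruct (Nat.eq_dec m 0) as [->|Hm0].
  - exists 0%nat. split; [lia|]. split; intros k Hk; [assert (k=0%nat) by lia; subst; lia| lia].
  - destruct IHm as [i [Hi [H1 H2]]]; [lia|].
    destruct (Z_le_gt_dec (F m) (F i)).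
    + exists m. split; [lia|]. split; [|intros; lia].
      intros k Hk. destruct (Nat.eq_dec k m); [subst; lia|].
      specialize (H1 k ltac:(lia)); lia.
    + exists i. split; [lia|]. split.
      * intros k Hk. destruct (Nat.eq_dec k m); [subst; lia|]. apply H1; lia.
      * intros k Hk. destruct (Nat.eq_dec k m); [subst; lia|]. apply H2; lia.
Qed.

Theorem mainTheorem7 (m : nat) (n : Z) (b t : nat -> Z)
  (hm : (1 <= m)%nat)
  (hb : zsum b m >= n)
  (ht : zsum t m = n + Z.of_nat m - 1) :
  forall l : nat, (1 <= l <= m)%nat ->
  exists i : nat, (i < m)%nat /\
    forall l' : nat, (1 <= l' <= l)%nat ->
      cyc_sum m b i l' >= 1 - Z.of_nat l' + cyc_sum m t i l'.
Proof.
  intros l Hl.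
  set (d := fun x : nat => b (x mod m)%nat - t (x mod m)%nat + 1).
  set (D := zsum d).
  assert (HS : D m >= 1).
  { unfold D. rewrite (zsum_ext d (fun j => b j - t j + 1)).
    - rewrite zsum_lin. lia.
    - intros j Hj. unfold d. rewrite Nat.mod_small by lia. reflexivity. }
  assert (HP : forall k, D (m + k)%nat = D m + D k).
  { intros k. unfold D. pose proof (zsum_shift d m k) as E.
    rewrite (zsum_ext (fun j => d (m + j)%nat) d) in E.
    - lia.
    - intros j _. unfold d. replace (m + j)%nat with (j + 1 * m)%nat by lia.
      rewrite Nat.Div0.mod_add. reflexivity. }
  destruct (argmin D m hm) as [i [Hi [H1 H2]]].
  exists i. split; [exact Hi|].
  intros l' Hl'.
  assert (E : cyc_sum m b i l' - cyc_sum m t i l' + Z.of_nat l' = D (i + l')%nat - D i).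
  { unfold cyc_sum, D. rewrite <- zsum_shift.
    rewrite <- (zsum_lin (fun j => b ((i + j) mod m)%nat) (fun j => t ((i + j) mod m)%nat)).
    reflexivity. }
  enough (D (i + l')%nat - D i >= 1) by lia.
  destruct (Nat.lt_ge_cases (i + l') m).
  - specialize (H2 (i + l')%nat ltac:(lia)). lia.
  - replace (i + l')%nat with (m + (i + l' - m))%nat by lia.
    rewrite HP. specialize (H1 (i + l' - m)%nat ltac:(lia)). lia.
Qed.
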